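(* Let $q$ be a prime power with $q\equiv 3\pmod 4$ and $m>1$ an odd integer. Then there exists a strongly regular Cayley graph with parameters $(q^{2m},\,r(q^m+1),\,-q^m+r^2+3r,\,r^2+r)$, where $r=q^{m-1}(q-1)/2$.
   Context: A Cayley graph $\mathrm{Cay}(G,D)$ on an additive group $G$ with $0\notin D=-D$ has vertex set $G$, with $x\sim y$ iff $x-y\in D$. A strongly regular graph with parameters $(v,k,\lambda,\mu)$ is a regular graph of valency $k$ on $v$ vertices, neither complete nor edgeless, in which any two adjacent vertices have exactly $\lambda$ common neighbours and any two non-adjacent vertices have exactly $\mu$ common neighbours. *)

(* Defs.v *)
From HB Require Import structures.
From mathcomp Require Import all_boot all_order all_algebra.
Set Implicit Arguments. Unset Strict Implicit. Unset Printing Implicit Defensive.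
Import GRing.Theory Num.Theory.
Local Open Scope ring_scope.

Definition cay_adj (G : finZmodType) (D : {set G}) : rel G :=
  fun x y => (x - y) \in D.

Definition cayley_set (G : finZmodType) (D : {set G}) : Prop :=
  0 \notin D /\ [set - x | x in D] = D.

Definition nbhd (T : finType) (adj : rel T) (x : T) : {set T} :=
  [set y | adj x y].

Definition common_nb (T : finType) (adj : rel T) (x y : T) : {set T} :=
  [set z | adj x z && adj y z].

(* Assumes adj is a simple graph
   relation (symmetric, irreflexive), which holds for Cayley graphs. *)
Definition srg (T : finType) (adj : rel T) (v k : nat) (lam mu : int) : Prop :=
  #|T| = v /\
  (forall x, #|nbhd adj x| = k) /\
  (exists x y, x != y /\ ~~ adj x y) /\
  (exists x y, adj x y) /\
  (forall x y, x != y -> adj x y -> (#|common_nb adj x y|)%:Z = lam) /\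
  (forall x y, x != y -> ~~ adj x y -> (#|common_nb adj x y|)%:Z = mu).

Definition prime_power (q : nat) : Prop :=
  exists p e : nat, prime p /\ (0 < e)%N /\ q = (p ^ e)%N.

(* Main.v *)
Require Import Defs.
From mathcomp Require Import all_boot all_order all_algebra all_field.
From mathcomp Require Import ring lra.
Set Implicit Arguments. Unset Strict Implicit. Unset Printing Implicit Defensive.
Import GRing.Theory Num.Theory.
Local Open Scope ring_scope.

Definition ind (b : bool) : rat := if b then 1 else 0.
Arguments ind : simpl never.

Lemma indA a b : ind (a && b) = ind a * ind b.
Proof. by case: a; case: b; rewrite /ind ?mulr1 ?mulr0 ?mul0r. Qed.

Lemma indN a : ind (~~ a) = 1 - ind a.
Proof. by case: a; rewrite /ind ?subrr ?subr0. Qed.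

Lemma ind1 : ind true = 1. Proof. by []. Qed.
Lemma ind0 : ind false = 0. Proof. by []. Qed.

Lemma card_ind (T : finType) (P : {pred T}) : (#|P|%:R : rat) = \sum_x ind (x \in P).
Proof.
rewrite -sum1_card natr_sum big_mkcond /=; apply: eq_bigr => x _.
rewrite /ind; case: (x \in P) => //=.
Qed.

Lemma sum_ind_eq (T : finType) (a : T) : \sum_x ind (x == a) = 1.
Proof.
rewrite (bigD1 a) //= big1 ?addr0; first by rewrite /ind eqxx.
by move=> x /negbTE xa; rewrite /ind xa.
Qed.

Lemma sum_ind_eq' (T : finType) (a : T) : \sum_x ind (a == x) = 1.
Proof. by rewrite -(sum_ind_eq a); apply: eq_bigr => x _; rewrite eq_sym. Qed.

Section Basics.
Variable F : finFieldType.
Hypothesis two0 : (2:F) != 0.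

Definition sq (s : F) : bool := [exists u, u ^+ 2 == s].
Definition inS (s : F) : bool := (s != 0) && sq s.
Definition nsq (s : F) : bool := (s != 0) && ~~ sq s.
Hypothesis m1 : ~~ sq (-1).

Lemma sqP s : reflect (exists u, u ^+ 2 = s) (sq s).
Proof.
apply: (iffP existsP) => [[u /eqP <-]|[u <-]]; by exists u.
Qed.

Lemma sq_sqr u : sq (u ^+ 2).
Proof. by apply/sqP; exists u. Qed.

Definition qF : rat := (#|F|)%:R.
Definition hS : rat := \sum_s ind (inS s).

Lemma cnt_sqrt s : \sum_x ind (x ^+ 2 == s) = ind (s == 0) + 2 * ind (inS s).
Proof.
have [->|s0] := eqVneq s 0.
  rewrite /inS eqxx /= ind1 ind0 mulr0 addr0.
  rewrite -(sum_ind_eq (0:F)); apply: eq_bigr => x _; by rewrite sqrf_eq0.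
rewrite /inS (negbTE s0) /= ind0 add0r.
case: (sqP s) => [[u us]|nsq_s]; last first.
  rewrite ind0 mulr0 big1 // => x _; case: eqP => // xs; case: nsq_s; by exists x.
have u0 : u != 0 by apply: contraNneq s0 => u0; rewrite -us u0 expr0n.
have unu : u != - u.
  apply/eqP => uu; move: (mulf_neq0 two0 u0).
  by rewrite mulr_natl mulr2n {1}uu addNr eqxx.
have -> : \sum_x ind (x ^+ 2 == s) = \sum_x (ind (x == u) + ind (x == - u)).
  apply: eq_bigr => x _; rewrite -us eqf_sqr /ind.
  case: (eqVneq x u) => [->|]; first by rewrite (negbTE unu).
  by case: (x == -u).
by rewrite big_split /= !sum_ind_eq ind1 mulr1.
Qed.

Lemma qF_hS : qF = 1 + 2 * hS.
Proof.
have -> : qF = \sum_(s : F) \sum_(x : F) ind (x ^+ 2 == s).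
  rewrite exchange_big /= /qF -sum1_card natr_sum; apply: eq_bigr => x _.
  by rewrite sum_ind_eq'.
by rewrite (eq_bigr _ (fun s _ => cnt_sqrt s)) big_split /= sum_ind_eq -mulr_sumr.
Qed.

Lemma sum_nsq : \sum_s ind (nsq s) = hS.
Proof.
have : \sum_(s : F) (ind (s == 0) + ind (inS s) + ind (nsq s)) = qF.
  rewrite /qF -sum1_card natr_sum; apply: eq_bigr => s _.
  rewrite /inS /nsq /ind; case: (s == 0); case: (sq s) => //=; rewrite ?addr0 ?add0r //.
rewrite !big_split /= sum_ind_eq -/hS qF_hS => h.
by apply: (addrI (1 + hS)); rewrite h; ring.
Qed.


Lemma sq_mul a b : sq a -> sq b -> sq (a * b).
Proof. by move=> /sqP[u <-] /sqP[v <-]; apply/sqP; exists (u * v); rewrite exprMn. Qed.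

Lemma sq_nsq_mul a b : inS a -> nsq b -> nsq (a * b).
Proof.
move=> /andP[a0 /sqP[u ua]] /andP[b0 nb]; rewrite /nsq mulf_neq0 //=.
apply: contra nb => /sqP[w wab]; apply/sqP; exists (w / u).
have u0 : u != 0 by apply: contraNneq a0 => u0; rewrite -ua u0 expr0n.
by rewrite expr_div_n wab -ua mulrC mulKf // expf_neq0.
Qed.

Lemma card_S_NS : #|[set s : F | inS s]| = #|[set s : F | nsq s]|.
Proof.
apply/eqP; rewrite -(eqr_nat rat) !card_ind.
have -> : \sum_x ind (x \in [set s : F | inS s]) = hS.
  by apply: eq_bigr => s _; rewrite inE.
have -> : \sum_x ind (x \in [set s : F | nsq s]) = hS.
  by rewrite -sum_nsq; apply: eq_bigr => s _; rewrite inE.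
by [].
Qed.

Lemma nsq_mul a b : nsq a -> nsq b -> sq (a * b).
Proof.
move=> na nb; have a0 : a != 0 by case/andP: na.
pose A := [set a * s | s in [set s : F | inS s]].
have cA : #|A| = #|[set s : F | inS s]| by rewrite card_imset //; apply: mulfI.
have sA : A \subset [set s : F | nsq s].
  apply/subsetP => x /imsetP[s]; rewrite !inE => /andP[s0 /sqP[v vs]] ->.
  rewrite /nsq mulf_neq0 //=; apply/negP => /sqP[w wx].
  case/andP: na => _ /negP; apply; apply/sqP.
  have v0 : v != 0 by apply: contraNneq s0 => v0; rewrite -vs v0 expr0n.
  exists (w / v); by rewrite expr_div_n wx vs mulfK.
have : A == [set s : F | nsq s] by rewrite eqEcard sA cA card_S_NS leqnn.
move/eqP => eA; have : b \in A by rewrite eA inE.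
case/imsetP => s; rewrite inE => /andP[_ /sqP[v <-]] ->.
by apply/sqP; exists (a * v); rewrite mulrA -expr2 exprMn.
Qed.

Lemma two_sq (c : F) : exists u v : F, u ^+ 2 + v ^+ 2 = c.
Proof.
pose SQ := [set s : F | sq s].
have cSQ : (2 * #|SQ| = #|F| + 1)%N.
  apply/eqP; rewrite -(eqr_nat rat) natrM natrD card_ind -/qF qF_hS.
  have -> : \sum_x ind (x \in SQ) = \sum_(x : F) (ind (x == 0) + ind (inS x)).
    apply: eq_bigr => x _; rewrite inE /inS /ind.
    case: eqP => [->|_] /=; last by case: (sq x).
    have -> : sq 0 by apply/sqP; exists 0; rewrite expr0n.
    by [].

  by rewrite big_split /= sum_ind_eq -/hS; apply/eqP; ring.
pose B := [set c - s | s in SQ].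
have cB : #|B| = #|SQ| by rewrite card_imset //; apply: subrI.
have : (0 < #|SQ :&: B|)%N.
  have := max_card (mem (SQ :|: B)); rewrite cardsU cB.
  case: (posnP #|SQ :&: B|) => // ->; rewrite subn0 addnn -mul2n cSQ.
  by rewrite addn1 ltnn.
case/card_gt0P => t; rewrite inE => /andP[]; rewrite inE => /sqP[u ut].
case/imsetP => s; rewrite inE => /sqP[v vs] tcs.
by exists u, v; rewrite ut tcs vs subrK.
Qed.

End Basics.
From mathcomp Require Import all_boot all_order all_algebra all_field.
From mathcomp Require Import ring lra.
Set Implicit Arguments. Unset Strict Implicit. Unset Printing Implicit Defensive.
Import GRing.Theory Num.Theory.
Local Open Scope ring_scope.

Lemma subBB (V : zmodType) (x y a b : V) : (x - y) - (a - b) = (x - a) - (y - b).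
Proof. by rewrite !opprB addrACA [in RHS]addrACA [- y - a]addrC. Qed.

Section Vec.
Variable F : finFieldType.
Hypothesis two0 : (2:F) != 0.
Variable n : nat.
Implicit Types x y z a b v w : 'rV[F]_n.

Definition Bf x y : F := (x *m y^T) 0 0.
Definition Qf x : F := Bf x x.

Lemma BfE x y : Bf x y = \sum_i x 0 i * y 0 i.
Proof. by rewrite /Bf mxE; apply: eq_bigr => i _; rewrite mxE. Qed.

Lemma BfC x y : Bf x y = Bf y x.
Proof. by rewrite !BfE; apply: eq_bigr => i _; rewrite mulrC. Qed.

Lemma BfDl x y z : Bf (x + y) z = Bf x z + Bf y z.
Proof. by rewrite !BfE -big_split; apply: eq_bigr => i _; rewrite mxE mulrDl. Qed.

Lemma BfNl x z : Bf (- x) z = - Bf x z.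
Proof. by rewrite !BfE -sumrN; apply: eq_bigr => i _; rewrite mxE mulNr. Qed.

Lemma BfZl t x z : Bf (t *: x) z = t * Bf x z.
Proof. by rewrite !BfE mulr_sumr; apply: eq_bigr => i _; rewrite mxE mulrA. Qed.

Lemma BfBl x y z : Bf (x - y) z = Bf x z - Bf y z.
Proof. by rewrite BfDl BfNl. Qed.

Lemma BfDr x y z : Bf z (x + y) = Bf z x + Bf z y.
Proof. by rewrite BfC BfDl !(BfC z). Qed.
Lemma BfBr x y z : Bf z (x - y) = Bf z x - Bf z y.
Proof. by rewrite BfC BfBl !(BfC z). Qed.
Lemma BfZr t x z : Bf z (t *: x) = t * Bf z x.
Proof. by rewrite BfC BfZl BfC. Qed.

Lemma QfD x y : Qf (x + y) = Qf x + 2 * Bf x y + Qf y.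
Proof. rewrite /Qf BfDl !BfDr (BfC y x); ring. Qed.
Lemma QfB x y : Qf (x - y) = Qf x - 2 * Bf x y + Qf y.
Proof. rewrite /Qf BfBl !BfBr (BfC y x); ring. Qed.
Lemma QfZ t x : Qf (t *: x) = t ^+ 2 * Qf x.
Proof. rewrite /Qf BfZl BfZr; ring. Qed.
Lemma QfN x : Qf (- x) = Qf x.
Proof. rewrite /Qf BfNl BfC BfNl; ring. Qed.
Lemma Qf0 : Qf 0 = 0.
Proof. by rewrite -(scale0r 0) QfZ expr0n mul0r. Qed.

Definition Dset : {set 'rV[F]_n} := [set x | inS (Qf x)].
Definition Wc a : rat := \sum_x ind ((x \in Dset) && (x - a \in Dset)).

Lemma W_map (f g : 'rV[F]_n -> 'rV[F]_n) a :
  cancel f g -> cancel g f -> (forall x y, f (x - y) = f x - f y) ->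
  (forall x, (f x \in Dset) = (x \in Dset)) -> Wc (f a) = Wc a.
Proof.
move=> fK gK fB fD; rewrite /Wc (reindex_inj (can_inj fK)) /=.
by apply: eq_bigr => x _; rewrite -fB !fD.
Qed.

Lemma W_scale t a : t != 0 -> Wc (t *: a) = Wc a.
Proof.
move=> t0; apply: (@W_map _ (fun x => t^-1 *: x)).
- by move=> x; rewrite scalerA mulVf ?scale1r.
- by move=> x; rewrite scalerA mulfV ?scale1r.
- by move=> x y; rewrite scalerBr.
move=> x; rewrite !inE QfZ /inS mulf_eq0 expf_eq0 (negbTE t0) /=.
case: (Qf x == 0) => //=; apply/idP/idP => /sqP[u hu]; apply/sqP.
  by exists (u / t); rewrite expr_div_n hu mulrC mulKf // expf_neq0.
by exists (t * u); rewrite exprMn hu.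
Qed.

Definition refl v x := x - (2 * Bf x v / Qf v) *: v.

Lemma reflK v : Qf v != 0 -> cancel (refl v) (refl v).
Proof.
move=> v0 x; rewrite /refl BfBl BfZl -/(Qf v).
set c := 2 * Bf x v / Qf v.
have -> : 2 * (Bf x v - c * Qf v) / Qf v = - c.
  rewrite /c; field; done.
by rewrite scaleNr opprK subrK.
Qed.

Lemma Qf_refl v x : Qf v != 0 -> Qf (refl v x) = Qf x.
Proof.
move=> v0; rewrite /refl QfB QfZ BfZr -/(Qf v); field; done.
Qed.

Lemma W_refl v a : Qf v != 0 -> Wc (refl v a) = Wc a.
Proof.
move=> v0; apply: (@W_map _ (refl v)); try exact: reflK.
- by move=> x y; rewrite /refl BfBl mulrBr mulrBl scalerBl subBB.
by move=> x; rewrite !inE Qf_refl.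
Qed.


Lemma W_eqQ a b : Qf a = Qf b -> Qf (a - b) != 0 -> Wc a = Wc b.
Proof.
move=> eab h0.
have e : Qf (a - b) = 2 * Bf a (a - b) by rewrite QfB BfBr -/(Qf a) -eab; ring.
have : refl (a - b) a = b.
  rewrite /refl e divff; last by rewrite -e.
  by rewrite scale1r opprB addrC subrK.
by move=> <-; rewrite W_refl.
Qed.

Lemma four0 : (2 * 2 : F) != 0.
Proof. by rewrite mulf_neq0. Qed.

Lemma W_sameQ a b : Qf a = Qf b -> Qf a != 0 -> Wc a = Wc b.
Proof.
move=> eab a0; case: (eqVneq (Qf (a - b)) 0) => h; last exact: W_eqQ.
have e : Qf (a + b) = 2 * 2 * Qf a.
  have := QfB a b; rewrite h -eab => h'.
  rewrite QfD -eab; apply: (addrI 0); rewrite {1}h'; ring.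
have -> : Wc b = Wc (- b).
  by rewrite -scaleN1r W_scale // oppr_eq0 oner_eq0.
apply: W_eqQ; first by rewrite QfN.
by rewrite opprK e mulf_neq0 // four0.
Qed.

Lemma W_class a b t : t != 0 -> Qf b = t ^+ 2 * Qf a -> Qf a != 0 -> Wc b = Wc a.
Proof.
move=> t0 eb a0; rewrite -(W_scale a t0); apply: W_sameQ.
  by rewrite QfZ.
by rewrite eb mulf_neq0 // expf_neq0.
Qed.

Lemma W_iso1 a b : Qf a = 0 -> Qf b = 0 -> Bf a b != 0 -> Wc a = Wc b.
Proof.
move=> a0 b0 ab; apply: W_eqQ; first by rewrite a0 b0.
by rewrite QfB a0 b0 sub0r addr0 oppr_eq0 mulf_neq0.
Qed.

Lemma Bf_delta a i : Bf a (delta_mx 0 i) = a 0 i.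
Proof.
rewrite BfE (bigD1 i) //= big1 ?addr0; first by rewrite mxE !eqxx mulr1.
by move=> j /negbTE ji; rewrite mxE ji andbF mulr0.
Qed.

Lemma nz_coord a : a != 0 -> exists i, a 0 i != 0.
Proof.
move=> a0; apply/existsP; apply: contraR a0; rewrite negb_exists => /forallP h.
by apply/eqP/rowP => i; rewrite mxE; apply/eqP; move: (h i); rewrite negbK.
Qed.

Lemma exists_w a b : a != 0 -> b != 0 -> exists w, (Bf a w != 0) && (Bf b w != 0).
Proof.
move=> /nz_coord[i ai] /nz_coord[j bj].
case: (eqVneq (b 0 i) 0) => bi; last first.
  by exists (delta_mx 0 i); rewrite !Bf_delta ai bi.
case: (eqVneq (a 0 j) 0) => aj; last first.
  by exists (delta_mx 0 j); rewrite !Bf_delta aj bj.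
exists (delta_mx 0 i + delta_mx 0 j); rewrite !BfDr !Bf_delta aj bi addr0 add0r.
by rewrite ai bj.
Qed.

Lemma W_iso a b : a != 0 -> b != 0 -> Qf a = 0 -> Qf b = 0 -> Wc a = Wc b.
Proof.
move=> an0 bn0 a0 b0; case: (eqVneq (Bf a b) 0) => ab; last exact: W_iso1.
have [w /andP[aw bw]] := exists_w an0 bn0.
pose t := - Qf w / (2 * Bf a w).
pose c := w + t *: a.
have ac : Bf a c = Bf a w by rewrite /c BfDr BfZr -/(Qf a) a0 mulr0 addr0.
have bc : Bf b c = Bf b w by rewrite /c BfDr BfZr (BfC b a) ab mulr0 addr0.
have c0 : Qf c = 0.
  rewrite /c QfD QfZ a0 mulr0 addr0 BfZr (BfC w a) /t; field.
  by rewrite aw two0.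
rewrite (W_iso1 a0 c0); last by rewrite ac.
by apply: W_iso1 => //; rewrite BfC bc.
Qed.

End Vec.
From mathcomp Require Import all_boot all_order all_algebra all_field.
From mathcomp Require Import ring lra.
Set Implicit Arguments. Unset Strict Implicit. Unset Printing Implicit Defensive.
Import GRing.Theory Num.Theory.
Local Open Scope ring_scope.

Section Count.
Variable F : finFieldType.
Hypothesis two0 : (2:F) != 0.
Hypothesis m1 : ~~ sq (-1 : F).

Local Notation q := (qF F).

Lemma qF_neq0 : q != 0.
Proof. by rewrite /qF pnatr_eq0 -lt0n; apply/card_gt0P; exists 0. Qed.

Lemma sum_row n1 n2 (f : 'rV[F]_(n1 + n2) -> rat) :
  \sum_x f x = \sum_u \sum_v f (row_mx u v).
Proof.
rewrite pair_bigA /=.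
apply: (reindex (fun p : 'rV[F]_n1 * 'rV[F]_n2 => row_mx p.1 p.2)).
exists (fun x => (lsubmx x, rsubmx x)) => [[u v] _|x _] /=.
  by rewrite row_mxKl row_mxKr.
by rewrite hsubmxK.
Qed.

Lemma Bf_row n1 n2 (u u' : 'rV[F]_n1) (v v' : 'rV[F]_n2) :
  Bf (row_mx u v) (row_mx u' v') = Bf u u' + Bf v v'.
Proof.
rewrite !BfE big_split_ord /=; congr (_ + _); apply: eq_bigr => i _.
  by rewrite !row_mxEl.
by rewrite !row_mxEr.
Qed.

Lemma Qf_row n1 n2 (u : 'rV[F]_n1) (v : 'rV[F]_n2) :
  Qf (row_mx u v) = Qf u + Qf v.
Proof. by rewrite /Qf Bf_row. Qed.

Lemma sum_val (T : finType) (g : T -> F) (h : F -> rat) :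
  \sum_x h (g x) = \sum_c (\sum_x ind (g x == c)) * h c.
Proof.
rewrite (eq_bigr (fun c => \sum_x ind (g x == c) * h c)); last first.
  by move=> c _; rewrite mulr_suml.
rewrite exchange_big /=; apply: eq_bigr => x _.
rewrite (bigD1 (g x)) //= eqxx ind1 mul1r big1 ?addr0 //.
by move=> c /negbTE gc; rewrite eq_sym gc ind0 mul0r.
Qed.

Lemma sum_const_card (T : finType) : \sum_(x : T) (1 : rat) = #|T|%:R.
Proof. by rewrite -sum1_card natr_sum. Qed.

Lemma card_rV n : \sum_(x : 'rV[F]_n) (1 : rat) = q ^+ n.
Proof. by rewrite sum_const_card card_mx mul1n natrX. Qed.

Definition Nc n (c : F) : rat := \sum_(x : 'rV[F]_n) ind (Qf x == c).

Lemma sum_Nc n : \sum_c Nc n c = q ^+ n.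
Proof.
rewrite /Nc exchange_big /= -card_rV; apply: eq_bigr => x _.
exact: sum_ind_eq'.
Qed.

Lemma sum_shift (g : F -> rat) (c : F) : \sum_d g (c - d) = \sum_d g d.
Proof.
rewrite (reindex_inj (inj_comp (addrI c) oppr_inj)) /=.
by apply: eq_bigr => d _; rewrite /= opprB addrCA subrr addr0.
Qed.

Lemma Nc0 c : Nc 0 c = ind (c == 0).
Proof.
rewrite /Nc (eq_bigr (fun _ => ind (c == 0))); last first.
  by move=> x _; rewrite thinmx0 Qf0 eq_sym.
rewrite -[RHS]mul1r -(expr0 q) -(card_rV 0) mulr_suml.
by apply: eq_bigr => x _; rewrite mul1r.
Qed.

End Count.
From mathcomp Require Import all_boot all_order all_algebra all_field.
From mathcomp Require Import ring lra.
Set Implicit Arguments. Unset Strict Implicit. Unset Printing Implicit Defensive.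
Import GRing.Theory Num.Theory.
Local Open Scope ring_scope.

Lemma sum_ind_mul (T : finType) (a : T) (g : T -> rat) :
  \sum_x ind (x == a) * g x = g a.
Proof.
rewrite (bigD1 a) //= eqxx ind1 mul1r big1 ?addr0 //.
by move=> x /negbTE ->; rewrite ind0 mul0r.
Qed.

Section Plane.
Variable F : finFieldType.
Hypothesis two0 : (2:F) != 0.
Hypothesis m1 : ~~ sq (-1 : F).
Local Notation q := (qF F).

Definition i0 : 'I_2 := ord0.
Definition i1 : 'I_2 := ord_max.

Lemma i1_neq : (i1 == i0) = false. Proof. by []. Qed.

Lemma ord2P (i : 'I_2) : i = i0 \/ i = i1.
Proof.
case: i => [[|[|k]] Hk]; [left|right|by []]; exact: val_inj.
Qed.

Definition mk2 (a b : F) : 'rV[F]_2 := \row_(i < 2) (if i == i0 then a else b).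

Lemma mk2E0 a b : mk2 a b 0 i0 = a. Proof. by rewrite mxE eqxx. Qed.
Lemma mk2E1 a b : mk2 a b 0 i1 = b. Proof. by rewrite mxE i1_neq. Qed.

Lemma mk2_eta (z : 'rV[F]_2) : z = mk2 (z 0 i0) (z 0 i1).
Proof.
apply/rowP => i; rewrite mxE; case: (ord2P i) => ->; first by rewrite eqxx.
by rewrite i1_neq.
Qed.

Lemma mk2_sub a b c d : mk2 a b - mk2 c d = mk2 (a - c) (b - d).
Proof. by apply/rowP => i; rewrite !mxE; case: (i == i0). Qed.

Lemma mk2_0 : mk2 0 0 = 0.
Proof. by apply/rowP => i; rewrite !mxE; case: (i == i0). Qed.

Lemma BfE2 (x y : 'rV[F]_2) : Bf x y = x 0 i0 * y 0 i0 + x 0 i1 * y 0 i1.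
Proof.
rewrite BfE big_ord_recl big_ord1; congr (_ + _).
by have -> : lift ord0 (ord0 : 'I_1) = i1 by apply: val_inj.
Qed.

Lemma Qf_mk2 a b : Qf (mk2 a b) = a ^+ 2 + b ^+ 2.
Proof. by rewrite /Qf BfE2 !mk2E0 !mk2E1 !expr2. Qed.

Lemma Qf2_eq0 (z : 'rV[F]_2) : (Qf z == 0) = (z == 0).
Proof.
apply/idP/idP; last by move/eqP->; rewrite Qf0.
rewrite [z]mk2_eta Qf_mk2; set a := z 0 i0; set b := z 0 i1 => /eqP h.
have b0 : b = 0.
  apply/eqP; apply: contraNT m1 => b0; apply/sqP; exists (a / b).
  rewrite expr_div_n; apply: (mulIf (expf_neq0 2 b0)); rewrite mulfVK ?expf_neq0 //.
  by rewrite mulN1r; apply/eqP; rewrite -addr_eq0 h.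
move: h; rewrite b0 expr0n addr0 => /eqP; rewrite sqrf_eq0 => /eqP ->.
by rewrite mk2_0.
Qed.

Definition cm (w z : 'rV[F]_2) : 'rV[F]_2 :=
  mk2 (w 0 i0 * z 0 i0 - w 0 i1 * z 0 i1) (w 0 i1 * z 0 i0 + w 0 i0 * z 0 i1).

Lemma Qf_cm w z : Qf (cm w z) = Qf w * Qf z.
Proof. by rewrite /cm Qf_mk2 [w]mk2_eta [z]mk2_eta !Qf_mk2 !mk2E0 !mk2E1; ring. Qed.

Lemma cm_sub w x y : cm w (x - y) = cm w x - cm w y.
Proof.
rewrite /cm mk2_sub !mxE /=; congr mk2; ring.
Qed.

Definition e1 : 'rV[F]_2 := mk2 1 0.

Lemma cm_e1 w : cm w e1 = w.
Proof.
by rewrite /cm /e1 !mk2E0 !mk2E1 !mulr1 !mulr0 subr0 addr0 -mk2_eta.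
Qed.

Lemma Qf_e1 : Qf e1 = 1.
Proof. by rewrite /e1 Qf_mk2 expr1n expr0n addr0. Qed.

Lemma cm_inj w : Qf w != 0 -> injective (cm w).
Proof.
move=> w0 x y /eqP; rewrite -subr_eq0 -cm_sub -Qf2_eq0 Qf_cm mulf_eq0 (negbTE w0) /=.
by rewrite Qf2_eq0 subr_eq0 => /eqP.
Qed.

Lemma Nc2_0 : Nc 2 (0:F) = 1.
Proof.
rewrite /Nc -(sum_ind_eq (0 : 'rV[F]_2)); apply: eq_bigr => x _.
by rewrite Qf2_eq0.
Qed.

Lemma exists_Qf (c : F) : exists w : 'rV[F]_2, Qf w = c.
Proof. by have [u [v h]] := two_sq two0 c; exists (mk2 u v); rewrite Qf_mk2. Qed.

Lemma Nc2_c (c : F) : c != 0 -> Nc 2 c = Nc 2 (1:F).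
Proof.
move=> c0; have [w wc] := exists_Qf c.
have w0 : Qf w != 0 by rewrite wc.
rewrite /Nc (reindex_inj (cm_inj w0)) /=; apply: eq_bigr => x _.
by rewrite Qf_cm wc -[X in _ == X](mulr1 c) (inj_eq (mulfI c0)).
Qed.

Lemma q1_neq0 : q - 1 != 0.
Proof.
rewrite subr_eq0 /qF pnatr_eq1.
by rewrite gtn_eqF // finNzRing_gt1.
Qed.

Lemma sum_nz1 : \sum_(c : F | c != 0) (1:rat) = q - 1.
Proof.
have := sum_const_card F; rewrite (bigD1 0) //= => h.
by rewrite /qF -h; ring.
Qed.

Lemma Nc2_1 : Nc 2 (1:F) = q + 1.
Proof.
have h := sum_Nc F 2.
rewrite (bigD1 (0:F)) //= Nc2_0 in h.
have e : \sum_(c : F | c != 0) Nc 2 c = \sum_(c : F | c != 0) (1 * Nc 2 (1:F)).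
  by apply: eq_bigr => c /Nc2_c ->; rewrite mul1r.
rewrite e -mulr_suml sum_nz1 in h.
apply: (mulfI q1_neq0).
apply: (addrI 1); rewrite h; ring.
Qed.

Lemma Nc2 (c : F) : Nc 2 c = q + 1 - q * ind (c == 0).
Proof.
case: (eqVneq c 0) => [->|c0]; first by rewrite Nc2_0 ind1; ring.
by rewrite Nc2_c // Nc2_1 ind0; ring.
Qed.

End Plane.
From mathcomp Require Import all_boot all_order all_algebra all_field.
From mathcomp Require Import ring lra.
Set Implicit Arguments. Unset Strict Implicit. Unset Printing Implicit Defensive.
Import GRing.Theory Num.Theory.
Local Open Scope ring_scope.

Section Rec.
Variable F : finFieldType.
Hypothesis two0 : (2:F) != 0.
Hypothesis m1 : ~~ sq (-1 : F).
Local Notation q := (qF F).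

Lemma Nc_rec k (c : F) : Nc (2 + k) c = (q + 1) * q ^+ k - q * Nc k c.
Proof.
rewrite {1}/Nc sum_row.
have ee : forall a b : F, (a + b == c) = (b == c - a).
  by move=> a b; rewrite [RHS]eq_sym subr_eq eq_sym addrC.
rewrite (eq_bigr (fun z => Nc k (c - Qf z))); last first.
  by move=> z _; apply: eq_bigr => y _; rewrite Qf_row ee.
rewrite (sum_val (@Qf F 2) (fun d => Nc k (c - d))).
rewrite (eq_bigr (fun d => (q + 1) * Nc k (c - d) - q * (ind (d == 0) * Nc k (c - d)))).
  by rewrite sumrB -!mulr_sumr sum_shift sum_Nc sum_ind_mul subr0.
by move=> d _; rewrite -/(Nc 2 d) (Nc2 two0 m1); ring.
Qed.

Lemma Nc_even j (c : F) :
  Nc (j.*2) c = q ^+ (j.*2) / q - (-q) ^+ j / q + (-q) ^+ j * ind (c == 0).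
Proof.
have q0 := qF_neq0 F.
elim: j c => [|j IH] c.
  by rewrite Nc0 expr0; field.
change (Nc (2 + j.*2) c = q ^+ (j.*2).+2 / q - (-q) ^+ j.+1 / q + (-q) ^+ j.+1 * ind (c == 0)).
rewrite Nc_rec IH !exprS; field; exact: q0.
Qed.

Lemma sum_affine (u v : F) (g : F -> rat) : u != 0 -> \sum_c g (v + u * c) = \sum_c g c.
Proof.
move=> u0; rewrite [RHS](reindex_inj (inj_comp (addrI v) (mulfI u0))) /=.
by [].
Qed.

Lemma fib n (a : 'rV[F]_n) (g : F -> rat) :
  a != 0 -> \sum_z g (Bf z a) = (q ^+ n / q) * \sum_c g c.
Proof.
move=> a0; have [i ai] := nz_coord a0.
pose f c := \sum_(z : 'rV[F]_n) ind (Bf z a == c).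
have fc : forall c, f c = f 0.
  move=> c; rewrite /f.
  pose t := c / a 0 i.
  rewrite (reindex_inj (addIr (t *: delta_mx 0 i))) /=.
  apply: eq_bigr => z _.
  rewrite BfDl BfZl (BfC (delta_mx 0 i)) Bf_delta /t mulfVK //.
  by rewrite -[X in _ == X](add0r c) (inj_eq (addIr c)).
have sf : \sum_c f c = q ^+ n.
  rewrite /f exchange_big /= -card_rV; apply: eq_bigr => z _; exact: sum_ind_eq'.
have f0 : f 0 = q ^+ n / q.
  have q0 := qF_neq0 F.
  rewrite -sf (eq_bigr (fun _ => 1 * f 0)); last by move=> c _; rewrite mul1r fc.
  by rewrite -mulr_suml sum_const_card -/(qF F) mulrC mulKf.
rewrite (sum_val (fun z => Bf z a) g) -/f mulr_sumr.
apply: eq_bigr => c _.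
have -> : \sum_(x : 'rV[F]_n) ind (Bf x a == c) = f c by [].
by rewrite fc f0.
Qed.


Lemma W_row k (a2 : 'rV[F]_2) (A B : rat) : a2 != 0 ->
  (forall e : F, Nc k e = A + B * ind (e == 0)) ->
  Wc (row_mx a2 (0 : 'rV[F]_k)) = A * q * (hS F) ^+ 2 + B * Wc a2.
Proof.
move=> a20 hN.
pose Phi (e : F) := \sum_(z : 'rV[F]_2) ind (inS (Qf z + e) && inS (Qf (z - a2) + e)).
have e1 : Wc (row_mx a2 (0 : 'rV[F]_k)) = \sum_(y : 'rV[F]_k) Phi (Qf y).
  rewrite /Wc sum_row exchange_big /=; apply: eq_bigr => y _.
  apply: eq_bigr => z _.
  by rewrite opp_row_mx add_row_mx oppr0 addr0 !inE !Qf_row.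
have e2 : Phi 0 = Wc a2.
  by rewrite /Phi /Wc; apply: eq_bigr => z _; rewrite !inE !addr0.
have q0 := qF_neq0 F.
have e3 : \sum_e Phi e = q * (hS F) ^+ 2.
  rewrite /Phi exchange_big /=.
  rewrite (eq_bigr (fun z => \sum_s ind (inS s) * ind (inS ((s + Qf a2) + (-2) * Bf z a2)))); last first.
    move=> z _; rewrite (reindex_inj (addrI (- Qf z))) /=.
    apply: eq_bigr => s _; rewrite indA addrA subrr add0r; congr (_ * ind (inS _)).
    rewrite QfB; ring.
  rewrite exchange_big /=.
  rewrite (eq_bigr (fun s => ind (inS s) * (q ^+ 2 / q * hS F))); last first.
    move=> s _; rewrite -mulr_sumr; congr (_ * _).
    rewrite (fib (fun c => ind (inS ((s + Qf a2) + (-2) * c)))) //.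
    by rewrite (@sum_affine (-2) (s + Qf a2) (fun d => ind (inS d))) // oppr_eq0.
  rewrite -mulr_suml -/(hS F); field; exact: q0.
rewrite e1 (sum_val (@Qf F k) Phi).
rewrite (eq_bigr (fun e => A * Phi e + B * (ind (e == 0) * Phi e))); last first.
  by move=> e _; rewrite -/(Nc k e) hN; ring.
by rewrite big_split /= -!mulr_sumr sum_ind_mul e2 e3; ring.
Qed.

End Rec.
From mathcomp Require Import all_boot all_order all_algebra all_field.
From mathcomp Require Import ring lra.
Set Implicit Arguments. Unset Strict Implicit. Unset Printing Implicit Defensive.
Import GRing.Theory Num.Theory.
Local Open Scope ring_scope.

Lemma sum_sub_shift (V : finZmodType) (b : V) (g : V -> rat) :
  \sum_u g (u - b) = \sum_u g u.
Proof.
by rewrite [RHS](reindex_inj (addIr (- b))).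
Qed.

Lemma sum_rsub (V : finZmodType) (x : V) (g : V -> rat) :
  \sum_u g (x - u) = \sum_u g u.
Proof.
rewrite [RHS](reindex_inj (inj_comp (addrI x) oppr_inj)) /=.
by [].
Qed.

Section Glob.
Variable F : finFieldType.
Hypothesis two0 : (2:F) != 0.
Hypothesis m1 : ~~ sq (-1 : F).
Local Notation q := (qF F).
Local Notation h := (hS F).

Definition kD n : rat := \sum_(x : 'rV[F]_n) ind (x \in Dset F n).
Definition kN n : rat := \sum_(x : 'rV[F]_n) ind (nsq (Qf x)).

Lemma sumW n : \sum_(a : 'rV[F]_n) Wc a = kD n ^+ 2.
Proof.
rewrite /Wc exchange_big /= expr2 /kD mulr_suml; apply: eq_bigr => x _.
rewrite (eq_bigr (fun a => ind (x \in Dset F n) * ind (x - a \in Dset F n))).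
  by rewrite -mulr_sumr (sum_rsub x (fun a => ind (a \in Dset F n))) mulrC.
by move=> a _; rewrite indA.
Qed.

Lemma W0 n : Wc (0 : 'rV[F]_n) = kD n.
Proof. by rewrite /Wc /kD; apply: eq_bigr => x _; rewrite subr0 andbb. Qed.

Lemma W_D n (e a : 'rV[F]_n) : Qf e = 1 -> a \in Dset F n -> Wc a = Wc e.
Proof.
move=> e1; rewrite inE => /andP[a0 /sqP[u ua]].
apply: (@W_class F two0 n e a u) => //; last by rewrite e1 oner_eq0.
  by apply: contraNneq a0 => u0; rewrite -ua u0 expr0n.
by rewrite e1 mulr1.
Qed.

Lemma W_N n (b a : 'rV[F]_n) : nsq (Qf b) -> nsq (Qf a) -> Wc a = Wc b.
Proof.
move=> nb na; have /sqP[w hw] := nsq_mul two0 na nb.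
have b0 : Qf b != 0 by case/andP: nb.
have a0 : Qf a != 0 by case/andP: na.
apply: (@W_class F two0 n b a (w / Qf b)) => //.
  rewrite mulf_neq0 ?invr_eq0 //; apply: contraNneq (mulf_neq0 a0 b0) => w0.
  by rewrite -hw w0 expr0n.
by rewrite expr_div_n hw; field.
Qed.

Lemma partW n (e b : 'rV[F]_n) : Qf e = 1 -> nsq (Qf b) ->
  kD n ^+ 2 = kD n + kD n * Wc e + kN n * Wc b +
    \sum_(a : 'rV[F]_n) ind ((a != 0) && (Qf a == 0)) * Wc a.
Proof.
move=> e1 nb; rewrite -sumW.
rewrite (eq_bigr (fun a => ind (a == 0) * Wc a + ind (a \in Dset F n) * Wc e
   + ind (nsq (Qf a)) * Wc b + ind ((a != 0) && (Qf a == 0)) * Wc a)).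
  by rewrite !big_split /= sum_ind_mul W0 -!mulr_suml.
move=> a _; case: (eqVneq a 0) => [->|a0].
  rewrite ind1 inE /inS /nsq Qf0 eqxx /= ind0; ring.
rewrite ind0 /=.
case: (eqVneq (Qf a) 0) => [qa|qa].
  by rewrite inE /inS /nsq qa eqxx /= ind0 ind1; ring.
case hD : (a \in Dset F n).
  have : ~~ nsq (Qf a) by move: hD; rewrite inE /inS /nsq => /andP[_ ->]; rewrite andbF.
  by move/negbTE->; rewrite ind0 ind1 (W_D e1 hD); ring.
have na : nsq (Qf a) by move: hD; rewrite inE /inS /nsq qa /= => /negbT.
by rewrite na ind0 ind1 (W_N nb na); ring.
Qed.

End Glob.
From mathcomp Require Import all_boot all_order all_algebra all_field.
From mathcomp Require Import ring lra.
Set Implicit Arguments. Unset Strict Implicit. Unset Printing Implicit Defensive.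
Import GRing.Theory Num.Theory.
Local Open Scope ring_scope.

Section PlaneW.
Variable F : finFieldType.
Hypothesis two0 : (2:F) != 0.
Hypothesis m1 : ~~ sq (-1 : F).
Local Notation q := (qF F).
Local Notation h := (hS F).

Lemma q_h : q = 1 + 2 * h.
Proof. exact: qF_hS. Qed.

Lemma h_neq0 : h != 0.
Proof.
apply: contra_neq (q1_neq0 F) => h0; rewrite q_h h0; ring.
Qed.

Lemma ex_nsq : exists nu : F, nsq nu.
Proof.
apply/existsP; apply: contraR h_neq0; rewrite negb_exists => /forallP hn.
rewrite -(sum_nsq two0) big1 // => s _; by rewrite (negbTE (hn s)) ind0.
Qed.

Lemma sum_plane (P : pred F) : P 0 = false ->
  \sum_(z : 'rV[F]_2) ind (P (Qf z)) = (q + 1) * \sum_c ind (P c).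
Proof.
move=> P0; rewrite (sum_val (@Qf F 2) (fun c => ind (P c))).
rewrite (eq_bigr (fun c => (q + 1) * ind (P c) - q * (ind (c == 0) * ind (P c)))).
  by rewrite sumrB -!mulr_sumr sum_ind_mul P0 ind0 mulr0 subr0.
by move=> c _; rewrite -/(Nc 2 c) (Nc2 two0 m1); ring.
Qed.

Lemma kD2 : kD F 2 = h * (q + 1).
Proof.
rewrite /kD (eq_bigr (fun z => ind (inS (Qf z)))); last by move=> z _; rewrite inE.
rewrite sum_plane; first by rewrite mulrC.
by rewrite /inS eqxx.
Qed.

Lemma kN2 : kN F 2 = h * (q + 1).
Proof. rewrite /kN sum_plane; first by rewrite (sum_nsq two0) mulrC.
by rewrite /nsq eqxx. Qed.

Lemma inS_nsq_mul (nu y : F) : nsq nu -> inS (nu * y) = nsq y.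
Proof.
move=> nn; case: (eqVneq y 0) => [->|y0].
  by rewrite mulr0 /inS /nsq eqxx.
case sy : (sq y).
  have iy : inS y by rewrite /inS y0 sy.
  have := sq_nsq_mul iy nn; rewrite mulrC /nsq /inS => /andP[-> /negbTE ->].
  by rewrite /nsq sy /= ?andbF.
have ny : nsq y by rewrite /nsq y0 sy.
by rewrite ny /inS (nsq_mul two0 nn ny) mulf_neq0 //; case/andP: nn.
Qed.

Lemma nsq_plane (u : 'rV[F]_2) :
  ind (nsq (Qf u)) = 1 - (ind (u \in Dset F 2) + ind (u == 0)).
Proof.
rewrite inE -Qf2_eq0 // /nsq /inS.
by case: (Qf u == 0); case: (sq (Qf u)); rewrite /= ?ind0 ?ind1; ring.
Qed.

Lemma Wb2 (b2 : 'rV[F]_2) : nsq (Qf b2) -> Wc b2 = 1 + Wc (e1 F).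
Proof.
move=> nb.
have b0 : Qf b2 != 0 by case/andP: nb.
have -> : Wc b2 = \sum_(u : 'rV[F]_2) ind (nsq (Qf u)) * ind (nsq (Qf (u - e1 F))).
  rewrite /Wc (reindex_inj (cm_inj m1 b0)) /=; apply: eq_bigr => u _.
  rewrite -{3}(cm_e1 b2) -cm_sub !inE !Qf_cm !(inS_nsq_mul _ nb) indA //.
rewrite (eq_bigr (fun u => 1 - (ind (u \in Dset F 2) + ind (u == 0))
     - (ind (u - e1 F \in Dset F 2) + ind (u - e1 F == 0))
     + (ind ((u \in Dset F 2) && (u - e1 F \in Dset F 2))
        + ind (u == e1 F) * ind (u \in Dset F 2)
        + ind (u == 0) * ind (u - e1 F \in Dset F 2)
        + ind (u == 0) * ind (u == e1 F)))); last first.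
  move=> u _; rewrite !nsq_plane indA subr_eq0; ring.
rewrite !big_split /= !sumrN !big_split /=.
have e1D : e1 F \in Dset F 2.
  by rewrite inE Qf_e1 /inS oner_eq0 /=; apply/sqP; exists 1; rewrite expr1n.
have e1D' : 0 - e1 F \in Dset F 2.
  by rewrite sub0r inE QfN Qf_e1 /inS oner_eq0 /=; apply/sqP; exists 1; rewrite expr1n.
have e10 : (0 == e1 F) = false.
  by apply/negbTE; apply/eqP => h0; move: (Qf_e1 F); rewrite -h0 Qf0 => /eqP; rewrite eq_sym oner_eq0.
rewrite sum_ind_eq !sum_ind_mul e1D e1D' e10 ind1 ind0.
rewrite (sum_sub_shift (e1 F) (fun u => ind (u \in Dset F 2))).
rewrite (sum_sub_shift (e1 F) (fun u => ind (u == 0))) sum_ind_eq.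
rewrite -/(Wc (e1 F)) -/(kD F 2) kD2 card_rV q_h; ring.
Qed.

Lemma plane_vals (b2 : 'rV[F]_2) : nsq (Qf b2) ->
  Wc (e1 F) = h ^+ 2 + h - 1 /\ Wc b2 = h ^+ 2 + h.
Proof.
move=> nb; have wb := Wb2 nb.
have hp := partW two0 (Qf_e1 F) nb.
rewrite big1 ?addr0 in hp; last first.
  by move=> a _; rewrite -Qf2_eq0 // andNb ind0 mul0r.
rewrite kN2 kD2 wb in hp.
have h0 : 0 <= h by apply: sumr_ge0 => c _; rewrite /ind; case: (inS c).
have hq : h * (q + 1) != 0.
  by rewrite mulf_neq0 ?h_neq0 // q_h; apply: lt0r_neq0; lra.
set W := Wc (e1 F) in hp *.
have e : h * (q + 1) * (2 * W - 2 * (h ^+ 2 + h - 1)) =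
   - ((h * (q + 1)) ^+ 2 - (h * (q + 1) + h * (q + 1) * W + h * (q + 1) * (1 + W))).
  rewrite q_h; ring.
move: e; rewrite hp subrr oppr0 => /eqP; rewrite mulf_eq0 (negbTE hq) /= subr_eq0.
have t0 : (2 : rat) != 0 by [].
move/eqP/(mulfI t0) => hW; rewrite wb -/W hW; split => //; ring.
Qed.


End PlaneW.
From mathcomp Require Import all_boot all_order all_algebra all_field.
From mathcomp Require Import ring lra.
Set Implicit Arguments. Unset Strict Implicit. Unset Printing Implicit Defensive.
Import GRing.Theory Num.Theory.
Local Open Scope ring_scope.

Section Final.
Variable F : finFieldType.
Hypothesis two0 : (2:F) != 0.
Hypothesis m1 : ~~ sq (-1 : F).
Local Notation q := (qF F).
Local Notation h := (hS F).
Variable j : nat.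
Hypothesis j_even : ~~ odd j.
Local Notation X := (q ^+ j).
Local Notation n := (2 + j.*2)%N.

Lemma mqj : (- q) ^+ j = X.
Proof. by rewrite exprNn -signr_odd (negbTE j_even) expr0 mul1r. Qed.

Lemma qj2 : q ^+ (j.*2) = X ^+ 2.
Proof. by rewrite -muln2 exprM. Qed.

Lemma NcK (c : F) : Nc (j.*2) c = (X ^+ 2 - X) / q + X * ind (c == 0).
Proof. by rewrite Nc_even // mqj qj2 mulrBl. Qed.

Lemma NcN (c : F) : Nc n c = q * X ^+ 2 + X - q * X * ind (c == 0).
Proof.
have q0 := qF_neq0 F.
have := Nc_even two0 m1 j.+1 c; rewrite exprS mqj.
change (Nc n c = q ^+ (j.*2).+2 / q - - q * X / q + - q * X * ind (c == 0) ->
  Nc n c = q * X ^+ 2 + X - q * X * ind (c == 0)).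
move=> ->; rewrite !exprS qj2; field; exact: q0.
Qed.

Definition lam : rat := X ^+ 2 * h ^+ 2 + X * (h - 1).
Definition mu : rat := X ^+ 2 * h ^+ 2 + X * h.

Lemma kDN : kD F n = h * (q * X ^+ 2 + X).
Proof.
rewrite /kD (eq_bigr (fun z => ind (inS (Qf z)))); last by move=> z _; rewrite inE.
rewrite (sum_val (@Qf F n) (fun c => ind (inS c))).
rewrite (eq_bigr (fun c => (q * X ^+ 2 + X) * ind (inS c) - q * X * (ind (c == 0) * ind (inS c)))).
  by rewrite sumrB -!mulr_sumr sum_ind_mul /inS eqxx ind0 mulr0 subr0 mulrC.
by move=> c _; rewrite -/(Nc n c) NcN; ring.
Qed.

Lemma kNN : kN F n = h * (q * X ^+ 2 + X).
Proof.
rewrite /kN (sum_val (@Qf F n) (fun c => ind (nsq c))).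
rewrite (eq_bigr (fun c => (q * X ^+ 2 + X) * ind (nsq c) - q * X * (ind (c == 0) * ind (nsq c)))).
  by rewrite sumrB -!mulr_sumr sum_ind_mul /nsq eqxx ind0 mulr0 subr0 (sum_nsq two0) mulrC.
by move=> c _; rewrite -/(Nc n c) NcN; ring.
Qed.

Definition eV : 'rV[F]_n := row_mx (e1 F) (0 : 'rV[F]_(j.*2)).

Lemma Qf_eV : Qf eV = 1.
Proof. by rewrite /eV Qf_row Qf_e1 Qf0 addr0. Qed.

Lemma e1_neq0 : e1 F != 0.
Proof. by apply/eqP => h0; move: (Qf_e1 F); rewrite h0 Qf0 => /eqP; rewrite eq_sym oner_eq0. Qed.

Lemma W_eV : Wc eV = lam.
Proof.
have q0 := qF_neq0 F.
have [nu nn] := ex_nsq two0.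
have [b2 hb] := exists_Qf two0 nu.
have [pe _] := @plane_vals F two0 m1 b2 (ltac:(by rewrite hb)).
rewrite /eV (W_row two0 (A := (X ^+ 2 - X) / q) (B := X) e1_neq0); last exact: NcK.
rewrite pe /lam; field; exact: q0.
Qed.


Lemma ex_bV : exists b : 'rV[F]_n, nsq (Qf b) /\ Wc b = mu.
Proof.
have q0 := qF_neq0 F.
have [nu nn] := ex_nsq two0.
have [b2 hb] := exists_Qf two0 nu.
have nb : nsq (Qf b2) by rewrite hb.
have [_ pb] := @plane_vals F two0 m1 b2 nb.
have b20 : b2 != 0 by apply/eqP => h0; move: nb; rewrite h0 Qf0 /nsq eqxx.
exists (row_mx b2 (0 : 'rV[F]_(j.*2))); split.
  by rewrite Qf_row Qf0 addr0.
rewrite (W_row two0 (A := (X ^+ 2 - X) / q) (B := X) b20); last exact: NcK.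
rewrite pb /mu; field; exact: q0.
Qed.

Lemma W_lam (a : 'rV[F]_n) : a \in Dset F n -> Wc a = lam.
Proof. by move=> aD; rewrite (W_D two0 Qf_eV aD) W_eV. Qed.

Lemma W_mu_nsq (a : 'rV[F]_n) : nsq (Qf a) -> Wc a = mu.
Proof. by move=> na; have [b [nb <-]] := ex_bV; apply: W_N. Qed.

Lemma W_mu_iso (a : 'rV[F]_n) : a != 0 -> Qf a = 0 -> Wc a = mu.
Proof.
move=> a0 qa; have [b [nb wb]] := ex_bV.
have hp := partW two0 Qf_eV nb.
pose I := \sum_(x : 'rV[F]_n) ind ((x != 0) && (Qf x == 0)).
have e1 : \sum_(x : 'rV[F]_n) ind ((x != 0) && (Qf x == 0)) * Wc x = I * Wc a.
  rewrite /I mulr_suml; apply: eq_bigr => x _.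
  case: (boolP ((x != 0) && (Qf x == 0))) => [/andP[x0 /eqP qx]|_].
    by rewrite (W_iso two0 x0 a0 qx qa).
  by rewrite ind0 !mul0r.
have eI : I = q * X ^+ 2 + X - q * X - 1.
  have := NcN 0; rewrite eqxx ind1 mulr1 => <-.
  rewrite /Nc /I [in RHS](eq_bigr (fun x => ind (x == 0) + ind ((x != 0) && (Qf x == 0)))).
    by rewrite big_split /= sum_ind_eq; ring.
  move=> x _; case: (eqVneq x 0) => [->|x0]; first by rewrite Qf0 eqxx ind1 ind0; ring.
  by rewrite /= ind0 add0r.
have I0 : I != 0.
  apply: lt0r_neq0; rewrite /I (bigD1 a) //= a0 qa eqxx ind1.
  have : 0 <= \sum_(i | i != a) ind ((i != 0) && (Qf i == 0)).
    by apply: sumr_ge0 => i _; rewrite /ind; case: (_ && _).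
  move=> hge; lra.
rewrite e1 kDN kNN W_eV wb in hp.
apply: (mulfI I0).
have q_h := q_h two0.
have e : I * Wc a = I * mu - ((h * (q * X ^+ 2 + X)) ^+ 2 -
  (h * (q * X ^+ 2 + X) + h * (q * X ^+ 2 + X) * lam + h * (q * X ^+ 2 + X) * mu + I * Wc a)).
  rewrite eI /lam /mu; move: (q ^+ j) => Xv; rewrite q_h; ring.
by rewrite e hp subrr subr0.
Qed.

Lemma card_common (x y : 'rV[F]_n) :
  (#|common_nb (cay_adj (Dset F n)) x y|%:R : rat) = Wc (x - y).
Proof.
rewrite card_ind /Wc -(sum_rsub x (fun u => ind ((u \in Dset F n) && (u - (x - y) \in Dset F n)))).
apply: eq_bigr => z _; rewrite inE /cay_adj.
suff -> : x - z - (x - y) = y - z by [].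
by rewrite opprB addrC addrA addrNK.
Qed.

Lemma card_nbhd (x : 'rV[F]_n) :
  (#|nbhd (cay_adj (Dset F n)) x|%:R : rat) = kD F n.
Proof.
rewrite card_ind /kD (eq_bigr (fun z => ind (x - z \in Dset F n))).
  by rewrite (sum_rsub x (fun u => ind (u \in Dset F n))).
by move=> z _; rewrite inE.
Qed.

End Final.
From mathcomp Require Import all_boot all_order all_algebra all_field.
From mathcomp Require Import ring lra zify.
Set Implicit Arguments. Unset Strict Implicit. Unset Printing Implicit Defensive.
Import GRing.Theory Num.Theory.
Local Open Scope ring_scope.

Lemma natzR (k : nat) : ((k%:Z)%:~R : rat) = k%:R.
Proof. by rewrite pmulrn. Qed.

Theorem corollary7p7 (q m : nat) :
  prime_power q -> (q %% 4 = 3)%N -> odd m -> (1 < m)%N ->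
  let r : nat := ((q ^ (m - 1) * (q - 1)) %/ 2)%N in
  exists (G : finZmodType) (D : {set G}),
    cayley_set D /\
    srg (cay_adj D) (q ^ (2 * m))%N (r * (q ^ m + 1))%N
        (- (q ^ m)%:Z + (r ^ 2)%:Z + (3 * r)%:Z) ((r ^ 2 + r)%N)%:Z.
Proof.
move=> [p [e [pp [e0 qe]]]] q4 om m1' r.
have [F pF cF] := pPrimePowerField pp e0.
rewrite -qe in cF.
have qodd : odd q.
  by rewrite -(odd_mod q (erefl false : odd 4 = false)) q4.
have two0 : (2 : F) != 0.
  apply/negP => /eqP h2.
  have : (p %| 2)%N by rewrite (dvdn_pcharf pF) h2.
  rewrite dvdn_prime2 //= => /eqP p2.
  move: qodd; rewrite qe p2 -(prednK e0) expnS oddM /=. by [].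
have m1 : ~~ sq (-1 : F).
  apply/negP => /sqP[u hu].
  have u4 : u ^+ 4 = 1 by rewrite (exprM u 2 2) hu sqrrN expr1n.
  have := expf_card u; rewrite cF (divn_eq q 4) q4 exprD mulnC exprM u4 expr1n mul1r.
  rewrite exprS hu mulrN1 => /eqP; rewrite eq_sym -addr_eq0 -mulr2n -mulr_natl mulf_eq0 (negbTE two0) /= => /eqP u0.
  by move: hu; rewrite u0 expr0n => /eqP; rewrite eq_sym oppr_eq0 oner_eq0.
have [j mj] : exists j, m = j.+1 by exists m.-1; rewrite prednK // ltnW.
have jev : ~~ odd j by move: om; rewrite mj /=.
pose h' := q./2.
have qh : q = (h'.*2 + 1)%N by rewrite -[LHS]odd_double_half qodd addnC.
have hh : hS F = h'%:R.
  have := qF_hS two0; rewrite /qF cF qh natrD -muln2 natrM => eq.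
  have t0 : (2 : rat) != 0 by [].
  apply: (mulfI t0); apply: (addrI 1); rewrite -eq; ring.
have rE : r = (q ^ j * h')%N.
  by rewrite /r mj subn1 /= qh addnK -muln2 mulnA mulnK.
exists ('rV[F]_(2 + j.*2) : finZmodType).
exists (Dset F (2 + j.*2)); split.
  split; first by rewrite inE Qf0 /inS eqxx.
  rewrite (can2_imset_pre _ (@opprK _) (@opprK _)).
  by apply/setP => x; rewrite !inE QfN.
have qR : qF F = q%:R by rewrite /qF cF.
refine (conj _ (conj _ (conj _ (conj _ (conj _ _))))).
- rewrite card_mx cF mul1n mj; congr (q ^ _)%N; rewrite -!mul2n; lia.
- move=> x; apply/eqP; rewrite -(eqr_nat rat) card_nbhd (kDN two0 m1 jev) hh rE mj.
  rewrite qR !natrM !natrD !natrX !exprS expr0; apply/eqP; ring.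
- have [b [nb _]] := ex_bV two0 m1 jev.
  exists b, 0; split.
    by apply/eqP => b0; move: nb; rewrite b0 Qf0 /nsq eqxx.
  rewrite /cay_adj subr0 inE /inS; case/andP: nb => -> /negbTE ->; by [].
- exists (eV F j), 0; rewrite /cay_adj subr0 inE Qf_eV /inS oner_eq0 /=.
  by apply/sqP; exists 1; rewrite expr1n.
- move=> x y xy adj; apply: (@intr_inj rat).
  rewrite natzR card_common (W_lam two0 m1 jev adj) /lam.
  rewrite !intrD intrN !natzR hh rE mj qR !natrM !natrX exprS !exprS expr0.
  move: (q%:R ^+ j : rat) => Xv; rewrite qh natrD -muln2 natrM; ring.
move=> x y xy nadj; apply: (@intr_inj rat).
rewrite natzR card_common.
have a0 : x - y != 0 by rewrite subr_eq0.
have -> : Wc (x - y) = mu F j.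
  case: (eqVneq (Qf (x - y)) 0) => [qa|qa].
    exact: (W_mu_iso two0 m1 jev a0 qa).
  apply: (W_mu_nsq two0 m1 jev); rewrite /nsq qa /=.
  by move: nadj; rewrite /cay_adj inE /inS qa.
rewrite /mu natzR natrD natrX hh rE qR !natrM !natrX; ring.
Qed.
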